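(* Let $k$ be even and let $n>k$ be an integer with $n\equiv k/2\pmod k$. Then $\mathrm{msum}(n,k)=1$, and if moreover $n$ is odd, then also $\mathrm{disc}(n,k)=1$.
   Context: Let $n,k$ be positive integers with $n>k$ and let $S_n$ be the set of permutations $\pi=(\pi_1,\dots,\pi_n)$ of $1,\dots,n$. Indices are taken cyclically: $\pi_{n+i}=\pi_i$. The $k$-consecutive sums of $\pi$ are $s_i=\sum_{j=0}^{k-1}\pi_{i+j}$ for $i=1,\dots,n$. Define $\mathrm{msum}(\pi,k)=\max\{s_i: 1\le i\le n\}-\frac{k(n+1)}{2}$, $\mathrm{msum}(n,k)=\min\{\mathrm{msum}(\pi,k):\pi\in S_n\}$, $\mathrm{disc}(\pi,k)=\max\{|s_i-\frac{k(n+1)}{2}|:1\le i\le n\}$ and $\mathrm{disc}(n,k)=\min\{\mathrm{disc}(\pi,k):\pi\in S_n\}$. *)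

(* Defs.v *)
From HB Require Import structures.
From mathcomp Require Import all_boot all_order all_algebra all_fingroup.
Set Implicit Arguments. Unset Strict Implicit. Unset Printing Implicit Defensive.
Import Order.TTheory GRing.Theory Num.Theory.
Local Open Scope ring_scope.

(* A permutation pi = (pi_1,...,pi_n) of 1..n is encoded by s : 'S_n via
   pi_{m+1} = (s m).+1 for m : 'I_n (0-based positions).
   Cyclic indexing: position m (any nat) means position m mod n. *)
Definition pival (n : nat) (s : 'S_n) (m : nat) : nat :=
  oapp (fun i : 'I_n => (s i).+1) 0%N (insub (m %% n)%N : option 'I_n).

Definition ksum (n k : nat) (s : 'S_n) (i : nat) : nat :=
  (\sum_(j < k) pival s (i + j))%N.

Definition kmean (n k : nat) : rat := (k * (n + 1))%:R / 2%:R.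

Definition msum_perm (n k : nat) (s : 'S_n) : rat :=
  \big[Num.max/(ksum k s 0)%:R]_(i < n) (ksum k s i)%:R - kmean n k.

Definition msum (n k : nat) : rat :=
  \big[Num.min/msum_perm k (1%g : 'S_n)]_(s : 'S_n) msum_perm k s.

Definition disc_perm (n k : nat) (s : 'S_n) : rat :=
  \big[Num.max/`|(ksum k s 0)%:R - kmean n k|]_(i < n) `|(ksum k s i)%:R - kmean n k|.

Definition disc (n k : nat) : rat :=
  \big[Num.min/disc_perm k (1%g : 'S_n)]_(s : 'S_n) disc_perm k s.

(* Main.v *)
Require Import Defs.
From HB Require Import structures.
From mathcomp Require Import all_boot all_order all_algebra all_fingroup.
From mathcomp Require Import zify ring lra.
Set Implicit Arguments. Unset Strict Implicit. Unset Printing Implicit Defensive.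
Import Order.TTheory GRing.Theory Num.Theory.

Lemma sum_shift1 (n : nat) (g : nat -> nat) :
  (forall j, g (j + n) = g j) -> \sum_(i < n) g i.+1 = \sum_(i < n) g i.
Proof.
case: n => [|n] gP; first by rewrite !big_ord0.
rewrite big_ord_recr big_ord_recl /= -(gP 0) add0n addnC.
congr (_ + _); exact: eq_bigr.
Qed.

Lemma sum_shift (n t : nat) (g : nat -> nat) :
  (forall j, g (j + n) = g j) -> \sum_(i < n) g (i + t) = \sum_(i < n) g i.
Proof.
move=> gP; elim: t => [|t IH]; first by apply: eq_bigr => i _; rewrite addn0.
rewrite -IH -(sum_shift1 (g := fun j => g (j + t))); last first.
  by move=> j; rewrite addnAC gP.
by apply: eq_bigr => i _; rewrite addnS.
Qed.

Lemma pivalD n (s : 'S_n) j : pival s (j + n) = pival s j.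
Proof. by rewrite /pival modnDr. Qed.

Lemma pival_mod n (s : 'S_n) j : pival s (j %% n) = pival s j.
Proof. by rewrite /pival modn_mod. Qed.

Lemma pival_ord n (s : 'S_n) (i : 'I_n) : pival s i = (s i).+1.
Proof.
rewrite /pival modn_small //; case: insubP => [u _ Hu|]; last by rewrite ltn_ord.
by rewrite /= (val_inj Hu).
Qed.

Lemma ksum_step n k (s : 'S_n) i :
  ksum k s i.+1 + pival s i = ksum k s i + pival s (i + k).
Proof.
rewrite /ksum addnC.
have -> : pival s i + \sum_(j < k) pival s (i.+1 + j) = \sum_(j < k.+1) pival s (i + j).
  by rewrite big_ord_recl addn0; congr (_ + _); apply: eq_bigr => j _; rewrite /= addnS.
by rewrite big_ord_recr.
Qed.

Lemma ksum_mod n k (s : 'S_n) i : ksum k s (i %% n) = ksum k s i.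
Proof.
apply: eq_bigr => j _; rewrite -pival_mod -[in RHS]pival_mod; congr pival.
by rewrite modnDml.
Qed.

Lemma sum_ksum n k (s : 'S_n) :
  \sum_(i < n) ksum k s i = k * \sum_(i < n) pival s i.
Proof.
rewrite /ksum exchange_big /=.
rewrite (eq_bigr (fun _ => \sum_(i < n) pival s i)); last first.
  by move=> j _; apply: sum_shift => t; exact: pivalD.
by rewrite sum_nat_const card_ord.
Qed.

Lemma sum_pival n (s : 'S_n) : (\sum_(i < n) pival s i).*2 = n * n.+1.
Proof.
rewrite (eq_bigr (fun i : 'I_n => (s i).+1)); last by move=> i _; exact: pival_ord.
rewrite (reindex_inj (@perm_inj _ (s^-1)%g)) /=.
rewrite (eq_bigr (fun i : 'I_n => (i : nat).+1)); last by move=> i _; rewrite permKV.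
elim: n {s} => [|n IH]; first by rewrite big_ord0.
rewrite big_ord_recr /= doubleD IH; lia.
Qed.
Lemma pival_k n k (s : 'S_n) M : (0 < n)%N ->
  (forall i : 'I_n, ksum k s i = M) -> forall i, pival s (i + k) = pival s i.
Proof.
move=> n0 H i.
have Hall : forall j, ksum k s j = M.
  case: n n0 s H => [|n] // _ s H j.
  by rewrite -ksum_mod (H (Ordinal (ltn_pmod j (ltn0Sn n)))).
have := @ksum_step n k s i; rewrite !Hall => E; lia.
Qed.

Lemma lower n k m t (s : 'S_n) :
  (0 < m)%N -> (m < n)%N -> k = m.*2 -> t * k = n + m ->
  exists i, (i < n)%N /\ (m * n.+1 < ksum k s i)%N.
Proof.
move=> m0 mn Hk Ht.
case: (boolP [exists i : 'I_n, m * n.+1 < ksum k s i]) => [/existsP [i Hi]|H].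
  by exists i.
exfalso.
have Hle : forall i : 'I_n, ksum k s i <= m * n.+1.
  by move=> i; rewrite leqNgt; apply/negP => Hi; move/negP: H; apply; apply/existsP; exists i.
have Hsum : \sum_(i < n) ksum k s i = \sum_(i < n) m * n.+1.
  rewrite sum_ksum sum_nat_const card_ord.
  have := sum_pival s; rewrite Hk; lia.
have Heq : forall i : 'I_n, ksum k s i = m * n.+1.
  have : \sum_(i < n) (m * n.+1 - ksum k s i) == 0.
    by rewrite sumnB ?Hsum ?subnn // => i _.
  rewrite sum_nat_eq0 => /forallP Hf i.
  have := Hf i; rewrite /= => /eqP; have := Hle i; lia.
have Hp := pival_k (ltn_trans m0 mn) Heq.
have Hpt : forall u, pival s (u * k) = pival s 0.
  by elim=> [|u IH]; rewrite ?mul0n // mulSn addnC Hp.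
have := Hpt t; rewrite Ht addnC pivalD.
have -> : m = Ordinal mn by [].
have -> : 0 = @Ordinal n 0 (ltn_trans m0 mn) by [].
rewrite !pival_ord => -[] E; have := congr1 val (@perm_inj _ s _ _ (val_inj E)); rewrite /= => E2; move: (m0); rewrite E2; lia.
Qed.
Definition Xv (r : nat) (x : nat -> nat) (a b : nat) : nat :=
  if odd a then r.-1 - x (b %% r) else x (b %% r).
Definition fv (m r : nat) (x : nat -> nat) (j : nat) : nat :=
  (j %% m) * r + Xv r x (j %% m) (j %/ m).

Lemma Xv_lt r x a b : (0 < r)%N -> (forall b, b < r -> x b < r)%N -> (Xv r x a b < r)%N.
Proof.
move=> r0 xr; have := xr (b %% r) (ltn_pmod b r0); rewrite /Xv; case: (odd a); lia.
Qed.

Lemma fv_lt m r x j : (0 < m)%N -> (0 < r)%N -> (forall b, b < r -> x b < r)%N ->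
  (fv m r x j < m * r)%N.
Proof.
move=> m0 r0 xr; rewrite /fv.
have hX := Xv_lt (j %% m) (j %/ m) r0 xr; have ha := ltn_pmod j m0.
move: hX ha; set X := Xv _ _ _ _; set a := j %% m => hX ha.
have : (a.+1 * r <= m * r)%N by rewrite leq_mul2r ha orbT.
rewrite mulSn; lia.
Qed.

Lemma fv_mod m r x j : (0 < m)%N -> fv m r x (j %% (m * r)) = fv m r x j.
Proof.
move=> m0; rewrite /fv.
have -> : (j %% (m * r)) %% m = j %% m by rewrite (modn_dvdm _ (dvdn_mulr r (dvdnn m))).
congr (_ + _); rewrite /Xv.
have -> : (j %% (m * r)) %/ m %% r = j %/ m %% r.
  by rewrite mulnC divn_modl ?dvdn_mull // mulnK // modn_mod.
by [].
Qed.

Lemma fv_inj m r x j1 j2 : (0 < m)%N -> (0 < r)%N -> (forall b, b < r -> x b < r)%N ->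
  (forall b1 b2, b1 < r -> b2 < r -> x b1 = x b2 -> b1 = b2)%N ->
  (j1 < m * r)%N -> (j2 < m * r)%N -> fv m r x j1 = fv m r x j2 -> j1 = j2.
Proof.
move=> m0 r0 xr xi h1 h2.
have hX1 := Xv_lt (j1 %% m) (j1 %/ m) r0 xr.
have hX2 := Xv_lt (j2 %% m) (j2 %/ m) r0 xr.
rewrite /fv => E.
have Ea : j1 %% m = j2 %% m.
  have := congr1 (fun z => z %/ r) E; rewrite /= !divnMDl // (divn_small hX1) (divn_small hX2) !addn0; exact.
have EX : Xv r x (j1 %% m) (j1 %/ m) = Xv r x (j2 %% m) (j2 %/ m).
  have := congr1 (fun z => z %% r) E; rewrite /= !modnMDl (modn_small hX1) (modn_small hX2); exact.
have b1r : (j1 %/ m < r)%N by rewrite ltn_divLR // mulnC.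
have b2r : (j2 %/ m < r)%N by rewrite ltn_divLR // mulnC.
have Eb : j1 %/ m = j2 %/ m.
  move: EX; rewrite /Xv Ea !(modn_small b1r) !(modn_small b2r).
  have := xr _ b1r; have := xr _ b2r.
  case: (odd _) => ? ? E2; apply: xi => //; lia.
by rewrite (divn_eq j1 m) (divn_eq j2 m) Ea Eb.
Qed.

Lemma exists_perm n (f : nat -> nat) : (forall j, f j < n)%N ->
  (forall j1 j2, j1 < n -> j2 < n -> f j1 = f j2 -> j1 = j2)%N ->
  exists s : 'S_n, forall j, pival s j = (f (j %% n)).+1.
Proof.
move=> flt finj.
have ginj : injective (fun i : 'I_n => Ordinal (flt i)).
  move=> i1 i2 [] E; apply: val_inj; exact: (finj _ _ (ltn_ord i1) (ltn_ord i2) E).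
exists (perm ginj) => j.
case: n flt finj ginj => [|n] flt finj ginj; first by have := flt 0.
rewrite -pival_mod.
have -> : j %% n.+1 = Ordinal (ltn_pmod j (ltn0Sn n)) by [].
by rewrite pival_ord permE.
Qed.
Definition qv m r x j := (fv m r x j).+1 + (fv m r x (j + m)).+1.
Definition Fz (r : nat) (x : nat -> nat) (b : nat) : int :=
  (Posz (x (b %% r)%N + x (b.+1 %% r)%N)%N - Posz r.-1)%R.
Definition Wv m r x i := \sum_(t < m) qv m r x (i + t).
Definition Dz m r x i : int :=
  let a := i %% m in let b := i %/ m in
  if odd a then ((Posz (odd m : nat) - 1) * Fz r x b + Fz r x b.+1)%R
  else (Posz (odd m : nat) * Fz r x b)%R.

Lemma ksum_W n m r x (s : 'S_n) i : (0 < m)%N -> n = m * r ->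
  (forall j, pival s j = (fv m r x (j %% n)).+1) ->
  ksum (m + m) s i = Wv m r x i.
Proof.
move=> m0 En Hs; rewrite /ksum /Wv big_split_ord /= -big_split /=.
apply: eq_bigr => t _; rewrite !Hs En !fv_mod // /qv; congr (_ + _).
by rewrite addnA addnAC.
Qed.

Lemma qv_int m r x j : (0 < m)%N -> (0 < r)%N -> (forall b, b < r -> x b < r)%N ->
  Posz (qv m r x j) = (Posz (2 * (j %% m) * r + r + 1)%N +
     (if odd (j %% m) then - Fz r x (j %/ m) else Fz r x (j %/ m)))%R.
Proof.
move=> m0 r0 xr; rewrite /qv /fv modnDr divnDr ?dvdnn // (_ : m %/ m = 1); last by rewrite divnn m0.
rewrite addn1 /Xv /Fz.
have h1 := xr _ (ltn_pmod (j %/ m) r0).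
have h2 := xr _ (ltn_pmod (j %/ m).+1 r0).
case: (odd (j %% m)); lia.
Qed.

Lemma W_step m r x i : Wv m r x i.+1 + qv m r x i = Wv m r x i + qv m r x (i + m).
Proof.
rewrite /Wv addnC.
have -> : qv m r x i + \sum_(t < m) qv m r x (i.+1 + t) = \sum_(t < m.+1) qv m r x (i + t).
  by rewrite big_ord_recl addn0; congr (_ + _); apply: eq_bigr => j _; rewrite /= addnS.
by rewrite big_ord_recr.
Qed.

Lemma W_base m r x L : (0 < m)%N -> (0 < r)%N -> (forall b, b < r -> x b < r)%N ->
  (L <= m)%N ->
  Posz (\sum_(t < L) qv m r x t)%N =
  (Posz L * (Posz L - 1) * Posz r + Posz L * (Posz r + 1) + Posz (odd L : nat) * Fz r x 0)%R.
Proof.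
move=> m0 r0 xr; elim: L => [|L IH] hL; first by rewrite big_ord0 /=; lia.
rewrite big_ord_recr /= PoszD IH ?(ltnW hL) // qv_int // modn_small // divn_small //.
case: (odd L) => /=; nia.
Qed.

Lemma succ_dm m i : (0 < m)%N ->
  ((i %% m).+1 < m -> i.+1 %% m = (i %% m).+1 /\ i.+1 %/ m = i %/ m)%N /\
  ((i %% m).+1 = m -> i.+1 %% m = 0 /\ i.+1 %/ m = (i %/ m).+1)%N.
Proof.
move=> m0; have E : i.+1 = i %/ m * m + (i %% m).+1 by rewrite addnS -divn_eq.
split=> h; rewrite E.
  by rewrite modnMDl modn_small // divnMDl // (divn_small h) addn0.
by rewrite h -mulSnr modnMl mulnK.
Qed.

Lemma W_formula m r x i : (0 < m)%N -> (0 < r)%N -> (forall b, b < r -> x b < r)%N ->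
  Posz (Wv m r x i) = (Posz (m * (m * r).+1)%N + Dz m r x i)%R.
Proof.
move=> m0 r0 xr; elim: i => [|i IH].
  rewrite /Wv (eq_bigr (fun t : 'I_m => qv m r x t)); last by move=> t _; rewrite add0n.
  rewrite W_base // /Dz mod0n div0n /=.
  case: (odd m) => /=; nia.
have E2 : (Posz (Wv m r x i.+1) = Posz (Wv m r x i) + Posz (qv m r x (i + m)) - Posz (qv m r x i))%R.
  by have := W_step m r x i; lia.
rewrite E2 IH !qv_int // modnDr.
rewrite divnDr ?dvdnn // (_ : m %/ m = 1); last by rewrite divnn m0.
rewrite !addn1.
have [hlt heq] := succ_dm i m0.
have := ltn_pmod i m0; rewrite leq_eqVlt => /orP [/eqP h|h].
  rewrite /Dz; move: (heq h) => [-> ->] /=.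
  have : odd m = ~~ odd (i %% m) by rewrite -[in LHS]h.
  case: (odd m); case: (odd (i %% m)) => //= _; lia.
rewrite /Dz; move: (hlt h) => [-> ->] /=.
case: (odd m); case: (odd (i %% m)) => /=; lia.
Qed.
Definition xz (r : nat) (b : nat) : nat := if odd b then r.-1 - b else b.
Definition xl (q : nat) (b : nat) : nat := (q.+1 * b) %% q.*2.+1.

Lemma xz_lt r b : (b < r -> xz r b < r)%N.
Proof. rewrite /xz; case: (odd b); lia. Qed.

Lemma xz_inj q b1 b2 : (b1 < q.*2.+1 -> b2 < q.*2.+1 ->
  xz q.*2.+1 b1 = xz q.*2.+1 b2 -> b1 = b2)%N.
Proof.
rewrite /xz -!muln2 /= => h1 h2.
have E1 := odd_double_half b1; have E2 := odd_double_half b2.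
move: E1 E2; rewrite -!muln2.
case: (odd b1); case: (odd b2) => /=; lia.
Qed.

Lemma xz_F q b : (- 1 <= Fz q.*2.+1 (xz q.*2.+1) b <= 1)%R.
Proof.
have r0 : (0 < q.*2.+1)%N by [].
have [hlt heq] := succ_dm b r0.
have := ltn_pmod b r0; rewrite leq_eqVlt => /orP [/eqP h|h].
  rewrite /Fz; move: (heq h) => [-> _]; rewrite /xz /=.
  have hu : b %% q.*2.+1 = q.*2 by move: h => [].
  rewrite hu odd_double /=; rewrite -muln2; lia.
rewrite /Fz; move: (hlt h) => [-> _]; rewrite /xz /=.
move: h; case: (odd (b %% q.*2.+1)) => /= h; lia.
Qed.

Lemma xl_lt q b : (xl q b < q.*2.+1)%N.
Proof. by rewrite /xl ltn_pmod. Qed.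

Lemma xl_inj q b1 b2 : (b1 < q.*2.+1 -> b2 < q.*2.+1 ->
  xl q b1 = xl q b2 -> b1 = b2)%N.
Proof.
rewrite /xl => h1 h2 E.
have key : forall b, (2 * ((q.+1 * b) %% q.*2.+1)) %% q.*2.+1 = b %% q.*2.+1.
  move=> b; rewrite modnMmr mulnA.
  have -> : 2 * q.+1 * b = b * q.*2.+1 + b by rewrite -!muln2; ring.
  by rewrite modnMDl.
by rewrite -(modn_small h1) -(modn_small h2) -(key b1) -(key b2) E.
Qed.

Lemma xl_F q b : (Fz q.*2.+1 (xl q) b.+1 - Fz q.*2.+1 (xl q) b <= 1)%R.
Proof.
rewrite /Fz /xl !modnMmr.
have -> : q.+1 * b.+2 = (q.+1 * b).+1 + q.*2.+1 by rewrite -!muln2; ring.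
rewrite modnDr -[(q.+1 * b).+1]addn1 -modnDml.
have := leq_mod ((q.+1 * b) %% q.*2.+1 + 1) q.*2.+1.
lia.
Qed.
Lemma bigmin_eq (T : finType) (f : T -> rat) x0 (c : rat) :
  (forall s, c <= f s)%R -> (exists s0, f s0 <= c)%R ->
  \big[Num.min/f x0]_(s : T) f s = c.
Proof.
move=> Hl [s0 Hs0]; apply/le_anti/andP; split.
  by rewrite (bigD1 s0) //= ge_min Hs0.
by elim/big_ind: _ => // x y hx hy; rewrite le_min hx hy.
Qed.

Lemma bigmax_ge n (g : 'I_n -> rat) x0 (i : 'I_n) (c : rat) :
  (c <= g i)%R -> (c <= \big[Num.max/x0]_(j < n) g j)%R.
Proof. by move=> h; rewrite (bigD1 i) //= le_max h. Qed.

Lemma bigmax_le n (g : 'I_n -> rat) x0 (c : rat) :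
  (x0 <= c)%R -> (forall i, g i <= c)%R -> (\big[Num.max/x0]_(j < n) g j <= c)%R.
Proof.
by move=> h0 h; elim/big_ind: _ => // x y hx hy; rewrite ge_max hx hy.
Qed.

Lemma construct n m q x : (0 < m)%N -> n = m * q.*2.+1 ->
  (forall b, b < q.*2.+1 -> x b < q.*2.+1)%N ->
  (forall b1 b2, b1 < q.*2.+1 -> b2 < q.*2.+1 -> x b1 = x b2 -> b1 = b2)%N ->
  exists s : 'S_n, forall i,
    Posz (ksum (m + m) s i) = (Posz (m * n.+1)%N + Dz m q.*2.+1 x i)%R.
Proof.
move=> m0 Hn xr xi.
have r0 : (0 < q.*2.+1)%N by [].
have [s Hs] : exists s : 'S_n, forall j, pival s j = (fv m q.*2.+1 x (j %% n)).+1.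
  apply: exists_perm.
    by move=> j; rewrite Hn; apply: fv_lt.
  by move=> j1 j2; rewrite Hn; apply: fv_inj.
exists s => i; rewrite (ksum_W (r := q.*2.+1) i m0 Hn Hs) W_formula // Hn.
reflexivity.
Qed.

Lemma U_odd n m q : (0 < m)%N -> odd m -> n = m * q.*2.+1 ->
  exists s : 'S_n, forall i,
    (- 1 <= Posz (ksum (m + m) s i) - Posz (m * n.+1)%N <= 1)%R.
Proof.
move=> m0 mo Hn.
have [s Hs] := construct (x := xz q.*2.+1) m0 Hn (fun b => @xz_lt _ b) (@xz_inj q).
exists s => i; rewrite Hs /Dz mo /=.
have := xz_F q (i %/ m); have := xz_F q (i %/ m).+1.
case: (odd (i %% m)) => /= /andP [h1 h2] /andP [h3 h4]; apply/andP; split; lia.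
Qed.

Lemma U_even n m q : (0 < m)%N -> ~~ odd m -> n = m * q.*2.+1 ->
  exists s : 'S_n, forall i, (ksum (m + m) s i <= (m * n.+1).+1)%N.
Proof.
move=> m0 me Hn.
have [s Hs] := construct (x := xl q) m0 Hn (fun b _ => xl_lt q b) (@xl_inj q).
exists s => i; have := Hs i; rewrite /Dz (negbTE me) /=.
have := xl_F q (i %/ m).
case: (odd (i %% m)) => /= h E; lia.
Qed.
Theorem corollary1p5 (n k : nat) :
  (0 < k)%N -> ~~ odd k -> (k < n)%N -> n = k./2 %[mod k] ->
  msum n k = 1%R /\ (odd n -> disc n k = 1%R).
Proof.
move=> k0 kev kn nmod.
set m := k./2.
have Hk : k = m + m.
  by have := odd_double_half k; rewrite (negbTE kev) add0n addnn => ->.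
have m0 : (0 < m)%N by lia.
have nm : n %% k = m by rewrite nmod modn_small //; lia.
set q := n %/ k.
have Hn : n = m * q.*2.+1.
  have := divn_eq n k; rewrite nm -/q Hk -muln2 => ->; ring.
have q0 : (0 < q)%N.
  move: kn; rewrite Hn Hk; case: (q) => [|q'] /=; first by rewrite muln1; lia.
  by [].
have mn : (m < n)%N by rewrite Hn -muln2; nia.
have Ht : (q.+1 * k = n + m)%N by rewrite Hn Hk -muln2; ring.
have Hk2 : k = m.*2 by rewrite Hk addnn.
have Hmean : kmean n k = ((m * n.+1)%N%:R : rat).
  rewrite /kmean (_ : (k * (n + 1) = (m * n.+1) * 2)%N); last by rewrite Hk; lia.
  by rewrite natrM mulfK.
have Low : forall s : 'S_n, exists i : 'I_n, (m * n.+1 < ksum k s i)%N.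
  move=> s; have [i [hi Hi]] := lower s m0 mn Hk2 Ht.
  by exists (Ordinal hi).
split.
  rewrite /msum; apply: bigmin_eq.
    move=> s; have [i Hi] := Low s; rewrite /msum_perm Hmean lerBrDr.
    apply: (@bigmax_ge _ _ _ i); rewrite nat1r ler_nat; exact: Hi.
  case: (boolP (odd m)) => mo.
    have [s Hs] := U_odd m0 mo Hn.
    exists s; rewrite /msum_perm Hmean lerBlDr nat1r Hk.
    apply: bigmax_le => [|i]; rewrite ler_nat; [have := Hs 0 | have := Hs i];
      move=> /andP [_ h]; lia.
  have [s Hs] := U_even m0 mo Hn.
  exists s; rewrite /msum_perm Hmean lerBlDr nat1r Hk.
  by apply: bigmax_le => [|i]; rewrite ler_nat.
move=> no.
have mo : odd m by move: no; rewrite Hn oddM => /andP [].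
rewrite /disc; apply: bigmin_eq.
  move=> s; have [i Hi] := Low s; rewrite /disc_perm Hmean.
  apply: (@bigmax_ge _ _ _ i); apply: le_trans (ler_norm _).
  rewrite lerBrDr nat1r ler_nat; exact: Hi.
have [s Hs] := U_odd m0 mo Hn.
exists s; rewrite /disc_perm Hmean Hk.
have key : forall i, (`|(ksum (m + m) s i)%:R - (m * n.+1)%:R| <= 1 :> rat)%R.
  move=> i; rewrite ler_norml.
  have [h1 h2] : (m * n.+1 <= (ksum (m + m) s i).+1)%N /\ (ksum (m + m) s i <= (m * n.+1).+1)%N.
    by have := Hs i => /andP [h1 h2]; split; lia.
  move: h1 h2; rewrite -!(ler_nat rat) -!nat1r => h1 h2.
  by apply/andP; split; lra.
by apply: bigmax_le => [|i]; apply: key.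
Qed.
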